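(* For each $n\in\mathbb{N}_0$ and $m=1,\ldots,n+1$ (with products taken in $\mathbb{H}$), \begin{align*} \mathbf{X}^{0,\dagger}_n&=\tfrac{1}{n+2}\big(\mathbf{X}^{1,\dagger}_n\mathbf{e}_1+\mathbf{Y}^{1,\dagger}_n\mathbf{e}_2\big),\\ \mathbf{X}^{m,\dagger}_n&=-\tfrac{n+m+1}{2}\big(\mathbf{X}^{m-1,\dagger}_n\mathbf{e}_1-\mathbf{Y}^{m-1,\dagger}_n\mathbf{e}_2\big)+\tfrac{1}{2(n+m+2)}\big(\mathbf{X}^{m+1,\dagger}_n\mathbf{e}_1+\mathbf{Y}^{m+1,\dagger}_n\mathbf{e}_2\big),\\ \mathbf{Y}^{m,\dagger}_n&=-\tfrac{n+m+1}{2}\big(\mathbf{Y}^{m-1,\dagger}_n\mathbf{e}_1+\mathbf{X}^{m-1,\dagger}_n\mathbf{e}_2\big)+\tfrac{1}{2(n+m+2)}\big(\mathbf{Y}^{m+1,\dagger}_n\mathbf{e}_1-\mathbf{X}^{m+1,\dagger}_n\mathbf{e}_2\big), \end{align*} where $\mathbf{X}^{m,\dagger}_n=\mathbf{Y}^{m,\dagger}_n:=0$ for $m\ge n+2$ and $\mathbf{Y}^{0,\dagger}_n:=0$; moreover $\mathbf{X}^{0,\dagger}_0=\tfrac12=\mathbf{X}^{1,\dagger}_0\mathbf{e}_1=\mathbf{Y}^{1,\dagger}_0\mathbf{e}_2$.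
   Context: Quaternions $\mathbb{H}$ have basis $1,\mathbf{e}_1,\mathbf{e}_2,\mathbf{e}_3$ with $\mathbf{e}_i^2=-1$, $\mathbf{e}_1\mathbf{e}_2=\mathbf{e}_3=-\mathbf{e}_2\mathbf{e}_1$, $\mathbf{e}_2\mathbf{e}_3=\mathbf{e}_1=-\mathbf{e}_3\mathbf{e}_2$, $\mathbf{e}_3\mathbf{e}_1=\mathbf{e}_2=-\mathbf{e}_1\mathbf{e}_3$. Reduced quaternions: $\mathcal{A}=\mathrm{span}_\mathbb{R}\{1,\mathbf{e}_1,\mathbf{e}_2\}$; $x=(x_0,x_1,x_2)\in\mathbb{R}^3$ is identified with $x_0+x_1\mathbf{e}_1+x_2\mathbf{e}_2$. $\overline{D}=\partial_{x_0}-\mathbf{e}_1\partial_{x_1}-\mathbf{e}_2\partial_{x_2}$. Spherical coordinates: $x_0=r\cos\theta_1$, $x_1=r\sin\theta_1\cos\theta_2$, $x_2=r\sin\theta_1\sin\theta_2$. $P^m_n(t)=(1-t^2)^{m/2}\frac{d^m}{dt^m}P_n(t)$ is the associated Legendre function ($P_n$ the Legendre polynomial), $T_k,U_k$ the Chebyshev polynomials of first and second kind. Spherical harmonics: $U^l_{n}=P^l_{n}(\cos\theta_1)T_l(\cos\theta_2)$, $V^m_{n}=P^m_{n}(\cos\theta_1)\sin\theta_2\,U_{m-1}(\cos\theta_2)$. Basis polynomials: $\mathbf{X}^{l,\dagger}_n:=\tfrac12\overline{D}\big(r^{n+1}U^l_{n+1}\big)$, $l=0,\ldots,n+1$, and $\mathbf{Y}^{m,\dagger}_n:=\tfrac12\overline{D}\big(r^{n+1}V^m_{n+1}\big)$,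 $m=1,\ldots,n+1$. *)

(* Defs.v *)
From Stdlib Require Import Reals ClassicalEpsilon.
Open Scope R_scope.

Record quat := mkQ { q0 : R; q1 : R; q2 : R; q3 : R }.

Definition qzero : quat := mkQ 0 0 0 0.
Definition qreal (a : R) : quat := mkQ a 0 0 0.
Definition qe1 : quat := mkQ 0 1 0 0.
Definition qe2 : quat := mkQ 0 0 1 0.
Definition qadd (a b : quat) : quat :=
  mkQ (q0 a + q0 b) (q1 a + q1 b) (q2 a + q2 b) (q3 a + q3 b).
Definition qopp (a : quat) : quat := mkQ (- q0 a) (- q1 a) (- q2 a) (- q3 a).
Definition qsub (a b : quat) : quat := qadd a (qopp b).
Definition qscal (r : R) (a : quat) : quat :=
  mkQ (r * q0 a) (r * q1 a) (r * q2 a) (r * q3 a).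
Definition qmul (a b : quat) : quat :=
  mkQ (q0 a * q0 b - q1 a * q1 b - q2 a * q2 b - q3 a * q3 b)
      (q0 a * q1 b + q1 a * q0 b + q2 a * q3 b - q3 a * q2 b)
      (q0 a * q2 b - q1 a * q3 b + q2 a * q0 b + q3 a * q1 b)
      (q0 a * q3 b + q1 a * q2 b - q2 a * q1 b + q3 a * q0 b).

(* ---------- Derivatives (classical total operator; true derivative when it exists) ---------- *)
Definition Deriv (g : R -> R) (t : R) : R :=
  @epsilon R (inhabits 0) (fun l => derivable_pt_lim g t l).
Definition iterDeriv (m : nat) (g : R -> R) : R -> R := Nat.iter m Deriv g.

Definition pd0 (f : R -> R -> R -> R) x0 x1 x2 := Deriv (fun t => f t x1 x2) x0.
Definition pd1 (f : R -> R -> R -> R) x0 x1 x2 := Deriv (fun t => f x0 t x2) x1.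
Definition pd2 (f : R -> R -> R -> R) x0 x1 x2 := Deriv (fun t => f x0 x1 t) x2.

(* (1/2) Dbar f for real-valued f, Dbar = d0 - e1 d1 - e2 d2; values in A subset H *)
Definition halfDbar (f : R -> R -> R -> R) (x0 x1 x2 : R) : quat :=
  mkQ (pd0 f x0 x1 x2 / 2) (- pd1 f x0 x1 x2 / 2) (- pd2 f x0 x1 x2 / 2) 0.

(* legPair n t = (P_n t, P_{n+1} t), Bonnet: (k+1)P_{k+1} = (2k+1) t P_k - k P_{k-1} *)
Fixpoint legPair (n : nat) (t : R) : R * R :=
  match n with
  | O => (1, t)
  | S k => let (a, b) := legPair k t in
           (b, ((2 * INR k + 3) * t * b - (INR k + 1) * a) / (INR k + 2))
  end.
Definition Legendre (n : nat) (t : R) : R := fst (legPair n t).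

Definition assocLegendre (m n : nat) (t : R) : R :=
  (sqrt (1 - t ^ 2)) ^ m * iterDeriv m (Legendre n) t.

Fixpoint chebPair (a0 a1 : R) (n : nat) (t : R) : R * R :=
  match n with
  | O => (a0, a1)
  | S k => let (a, b) := chebPair a0 a1 k t in (b, 2 * t * b - a)
  end.
Definition ChebT (n : nat) (t : R) : R := fst (chebPair 1 t n t).
Definition ChebU (n : nat) (t : R) : R := fst (chebPair 1 (2 * t) n t).

(* x0 = r cos th1, x1 = r sin th1 cos th2, x2 = r sin th1 sin th2, th1 in [0,pi].
   Conventions at degenerate points: th1 = 0 if r = 0, th2 = 0 if x1 = x2 = 0. *)
Definition radius (x0 x1 x2 : R) : R := sqrt (x0 ^ 2 + x1 ^ 2 + x2 ^ 2).
Definition rho (x1 x2 : R) : R := sqrt (x1 ^ 2 + x2 ^ 2).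
Definition cos_th1 (x0 x1 x2 : R) : R :=
  if Req_dec_T (radius x0 x1 x2) 0 then 1 else x0 / radius x0 x1 x2.
Definition cos_th2 (x1 x2 : R) : R :=
  if Req_dec_T (rho x1 x2) 0 then 1 else x1 / rho x1 x2.
Definition sin_th2 (x1 x2 : R) : R :=
  if Req_dec_T (rho x1 x2) 0 then 0 else x2 / rho x1 x2.

Definition sphU (l k : nat) (x0 x1 x2 : R) : R :=
  assocLegendre l k (cos_th1 x0 x1 x2) * ChebT l (cos_th2 x1 x2).
Definition sphV (m k : nat) (x0 x1 x2 : R) : R :=
  assocLegendre m k (cos_th1 x0 x1 x2) * sin_th2 x1 x2 * ChebU (m - 1) (cos_th2 x1 x2).

Definition Xdag (l n : nat) (x0 x1 x2 : R) : quat :=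
  if Nat.leb (n + 2) l then qzero
  else halfDbar (fun a b c => radius a b c ^ (n + 1) * sphU l (n + 1) a b c) x0 x1 x2.
Definition Ydag (m n : nat) (x0 x1 x2 : R) : quat :=
  if Nat.eqb m 0 then qzero
  else if Nat.leb (n + 2) m then qzero
  else halfDbar (fun a b c => radius a b c ^ (n + 1) * sphV m (n + 1) a b c) x0 x1 x2.

(* Main.v *)
Require Import Defs.
From Stdlib Require Import Reals Lra Lia ClassicalEpsilon FunctionalExtensionality.
Open Scope R_scope.

Lemma D_eqv f x a b : derivable_pt_lim f x a -> a = b -> derivable_pt_lim f x b.
Proof. intros H ->; exact H. Qed.
Lemma dPlus f g x a b : derivable_pt_lim f x a -> derivable_pt_lim g x b ->
  derivable_pt_lim (fun t => f t + g t) x (a + b).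
Proof. intros; apply (derivable_pt_lim_plus f g); auto. Qed.
Lemma dMinus f g x a b : derivable_pt_lim f x a -> derivable_pt_lim g x b ->
  derivable_pt_lim (fun t => f t - g t) x (a - b).
Proof. intros; apply (derivable_pt_lim_minus f g); auto. Qed.
Lemma dMult f g x a b : derivable_pt_lim f x a -> derivable_pt_lim g x b ->
  derivable_pt_lim (fun t => f t * g t) x (a * g x + f x * b).
Proof. intros; apply (derivable_pt_lim_mult f g); auto. Qed.
Lemma dConst (c x : R) : derivable_pt_lim (fun _ => c) x 0.
Proof. apply derivable_pt_lim_const. Qed.
Lemma dId x : derivable_pt_lim (fun t => t) x 1.
Proof. apply derivable_pt_lim_id. Qed.
Lemma dComp f g x a b : derivable_pt_lim g x a -> derivable_pt_lim f (g x) b ->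
  derivable_pt_lim (fun t => f (g t)) x (b * a).
Proof. intros; apply (derivable_pt_lim_comp g f); auto. Qed.
Lemma dLoc f g x a (d : R) : 0 < d -> (forall t, Rabs (t - x) < d -> f t = g t) ->
  derivable_pt_lim f x a -> derivable_pt_lim g x a.
Proof.
  intros Hd Heq H eps Heps.
  destruct (H eps Heps) as [del Hdel].
  assert (Hm : 0 < Rmin del d) by (apply Rmin_pos; [apply cond_pos | exact Hd]).
  exists (mkposreal _ Hm). intros h Hh0 Hh. simpl in Hh.
  rewrite <- (Heq (x + h)), <- (Heq x).
  - apply Hdel; auto. eapply Rlt_le_trans; [exact Hh | apply Rmin_l].
  - replace (x - x) with 0 by ring; rewrite Rabs_R0; auto.
  - replace (x + h - x) with h by ring. eapply Rlt_le_trans; [exact Hh | apply Rmin_r].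
Qed.
Lemma dExt f g x a : (forall t, f t = g t) -> derivable_pt_lim f x a -> derivable_pt_lim g x a.
Proof. intros Heq H. apply (dLoc f g x a 1); auto; lra. Qed.
Lemma dInv f x a : derivable_pt_lim f x a -> f x <> 0 ->
  derivable_pt_lim (fun t => / f t) x (- a / (f x) ^ 2).
Proof.
  intros H Hf.
  eapply D_eqv.
  - eapply dExt; [|apply (derivable_pt_lim_div (fun _ => 1) f x 0 a); auto; apply dConst].
    intros t; unfold div_fct; simpl; unfold Rdiv; ring.
  - unfold Rsqr; field; auto.
Qed.
Lemma dSqrt f x a : derivable_pt_lim f x a -> 0 < f x ->
  derivable_pt_lim (fun t => sqrt (f t)) x (a / (2 * sqrt (f x))).
Proof.
  intros H Hp. eapply D_eqv.
  - apply (dComp sqrt f x a); [exact H | apply derivable_pt_lim_sqrt; auto].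
  - unfold Rdiv; ring.
Qed.
Lemma dPow f x a n : derivable_pt_lim f x a ->
  derivable_pt_lim (fun t => f t ^ n) x (INR n * f x ^ pred n * a).
Proof.
  intros H. apply (dComp (fun y => y ^ n) f x a); auto. apply derivable_pt_lim_pow.
Qed.
Lemma Deriv_eq f x a : derivable_pt_lim f x a -> Deriv f x = a.
Proof.
  intros H. unfold Deriv.
  apply (uniqueness_limite f x).
  - apply (epsilon_spec (inhabits 0) (fun l => derivable_pt_lim f x l)). eauto.
  - exact H.
Qed.
Lemma D_unique_eq f g x a b : (forall t, f t = g t) -> derivable_pt_lim f x a ->
  derivable_pt_lim g x b -> a = b.
Proof.
  intros Heq Ha Hb. apply (uniqueness_limite g x); auto. eapply dExt; eauto.
Qed.

Inductive IsP : nat -> (R -> R) -> Prop :=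
| IsP_c : forall d c, IsP d (fun _ => c)
| IsP_x : forall d f, IsP d f -> IsP (S d) (fun t => t * f t)
| IsP_add : forall d f g, IsP d f -> IsP d g -> IsP d (fun t => f t + g t)
| IsP_scal : forall d a f, IsP d f -> IsP d (fun t => a * f t)
| IsP_ext : forall d f g, IsP d f -> (forall t, f t = g t) -> IsP d g.

Lemma IsP_S d f : IsP d f -> IsP (S d) f.
Proof.
  induction 1.
  - apply IsP_c.
  - apply IsP_x; auto.
  - apply IsP_add; auto.
  - apply IsP_scal; auto.
  - eapply IsP_ext; eauto.
Qed.

Lemma IsP_deriv d f : IsP d f -> exists g, IsP (pred d) g /\
  (forall t, derivable_pt_lim f t (g t)) /\ (d = 0%nat -> forall t, g t = 0).
Proof.
  induction 1.
  - exists (fun _ => 0). split; [apply IsP_c|]. split; auto. intros; apply dConst.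
  - destruct IHIsP as [g [Hg [Hd Hz]]].
    exists (fun t => f t + t * g t). split; [|split].
    + destruct d as [|d'].
      * eapply IsP_ext; [exact H|]. intros t; simpl; rewrite (Hz eq_refl t); ring.
      * simpl. apply IsP_add; auto. apply IsP_x. exact Hg.
    + intros t. eapply D_eqv; [apply dMult; [apply dId | apply Hd]|]. cbv beta; ring.
    + discriminate.
  - destruct IHIsP1 as [g1 [Hg1 [Hd1 Hz1]]]. destruct IHIsP2 as [g2 [Hg2 [Hd2 Hz2]]].
    exists (fun t => g1 t + g2 t). split; [apply IsP_add; auto|]. split.
    + intros t; apply dPlus; auto.
    + intros E t; rewrite Hz1, Hz2; auto; ring.
  - destruct IHIsP as [g [Hg [Hd Hz]]].
    exists (fun t => a * g t). split; [apply IsP_scal; auto|]. split.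
    + intros t. eapply D_eqv; [apply dMult; [apply dConst | apply Hd]|]. cbv beta; ring.
    + intros E t; rewrite Hz; auto; ring.
  - destruct IHIsP as [g' [Hg [Hd Hz]]].
    exists g'. split; auto. split; auto. intros t. eapply dExt; [exact H0|]. apply Hd.
Qed.

Lemma IsP_Deriv d f : IsP d f -> IsP (pred d) (Deriv f) /\
  (forall t, derivable_pt_lim f t (Deriv f t)) /\ (d = 0%nat -> forall t, Deriv f t = 0).
Proof.
  intros H. destruct (IsP_deriv d f H) as [g [Hg [Hd Hz]]].
  assert (E : forall t, Deriv f t = g t) by (intros; apply Deriv_eq; auto).
  split; [eapply IsP_ext; [exact Hg| intros; rewrite E; auto]|].
  split; intros; rewrite E; auto.
Qed.

Lemma iterDeriv_S l f : iterDeriv (S l) f = Deriv (iterDeriv l f).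
Proof. reflexivity. Qed.

Lemma IsP_iter d f : IsP d f -> forall l, IsP (d - l) (iterDeriv l f) /\
  (forall t, derivable_pt_lim (iterDeriv l f) t (iterDeriv (S l) f t)).
Proof.
  intros H l. induction l as [|l IH].
  - simpl. replace (d - 0)%nat with d by lia. split; auto.
    destruct (IsP_Deriv d f H) as [_ [Hd _]]. exact Hd.
  - destruct IH as [Hl _].
    destruct (IsP_Deriv _ _ Hl) as [Hp [Hd _]].
    rewrite iterDeriv_S. split.
    + replace (d - S l)%nat with (pred (d - l)) by lia. exact Hp.
    + destruct (IsP_Deriv _ _ Hp) as [_ [Hd2 _]]. intros t. exact (Hd2 t).
Qed.

Lemma IsP_iter_zero d f : IsP d f -> forall l t, (d < l)%nat -> iterDeriv l f t = 0.
Proof.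
  intros H l t Hl. destruct l as [|l]; [lia|].
  destruct (IsP_iter d f H l) as [Hp _].
  rewrite iterDeriv_S. destruct (IsP_Deriv _ _ Hp) as [_ [_ Hz]]. apply Hz. lia.
Qed.

Lemma IsP_bound d f : IsP d f -> exists C, forall t, Rabs t <= 1 -> Rabs (f t) <= C.
Proof.
  induction 1.
  - exists (Rabs c). intros; lra.
  - destruct IHIsP as [C HC]. exists (Rabs C). intros t Ht.
    rewrite Rabs_mult. specialize (HC t Ht).
    assert (0 <= Rabs (f t)) by apply Rabs_pos.
    assert (0 <= Rabs t) by apply Rabs_pos.
    assert (C <= Rabs C) by apply RRle_abs. nra.
  - destruct IHIsP1 as [C1 H1]. destruct IHIsP2 as [C2 H2]. exists (C1 + C2).
    intros t Ht. eapply Rle_trans; [apply Rabs_triang|]. specialize (H1 t Ht); specialize (H2 t Ht); lra.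
  - destruct IHIsP as [C HC]. exists (Rabs a * C). intros t Ht. rewrite Rabs_mult.
    apply Rmult_le_compat_l; [apply Rabs_pos| auto].
  - destruct IHIsP as [C HC]. exists C. intros t Ht. rewrite <- H0. auto.
Qed.

Lemma Leg0 t : Legendre 0 t = 1. Proof. reflexivity. Qed.
Lemma Leg1 t : Legendre 1 t = t. Proof. reflexivity. Qed.
Lemma LegS k t : Legendre (S k) t = snd (legPair k t).
Proof. unfold Legendre; simpl. destruct (legPair k t); reflexivity. Qed.
Lemma Leg_rec k t : Legendre (S (S k)) t =
  ((2 * INR k + 3) * t * Legendre (S k) t - (INR k + 1) * Legendre k t) / (INR k + 2).
Proof.
  rewrite LegS, LegS. unfold Legendre. simpl. destruct (legPair k t); reflexivity.
Qed.

Lemma INR_pos k : 0 <= INR k. Proof. apply pos_INR. Qed.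

Lemma Leg_IsP k : IsP k (Legendre k) /\ IsP (S k) (Legendre (S k)).
Proof.
  induction k as [|k [H1 H2]].
  - split.
    + eapply IsP_ext; [apply (IsP_c 0 1)|]. intros; reflexivity.
    + eapply IsP_ext; [apply IsP_x; apply (IsP_c 0 1)|]. intros; rewrite Leg1; ring.
  - split; auto.
    eapply IsP_ext.
    + apply IsP_add.
      * apply (IsP_scal _ ((2 * INR k + 3) / (INR k + 2))). apply IsP_x. exact H2.
      * apply (IsP_scal _ (- (INR k + 1) / (INR k + 2))). apply IsP_S, IsP_S. exact H1.
    + intros t. rewrite Leg_rec. assert (0 <= INR k) by apply INR_pos. field. lra.
Qed.

Definition pd (l N : nat) : R -> R := iterDeriv l (Legendre N).

Lemma pd_D l N t : derivable_pt_lim (pd l N) t (pd (S l) N t).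
Proof. destruct (IsP_iter _ _ (proj1 (Leg_IsP N)) l) as [_ H]. apply H. Qed.

Lemma pd_zero l N t : (N < l)%nat -> pd l N t = 0.
Proof. intros; apply (IsP_iter_zero N); auto. apply Leg_IsP. Qed.

Lemma pd_bound l N : exists C, forall t, Rabs t <= 1 -> Rabs (pd l N t) <= C.
Proof. destruct (IsP_iter _ _ (proj1 (Leg_IsP N)) l) as [H _]. eapply IsP_bound; eauto. Qed.

Lemma pdO N t : pd 0 N t = Legendre N t. Proof. reflexivity. Qed.

Lemma pd_fun0 N : pd 0 N = Legendre N. Proof. reflexivity. Qed.

Lemma pd1_0 t : pd 1 0 t = 0.
Proof. apply pd_zero; lia. Qed.
Lemma pd1_1 t : pd 1 1 t = 1.
Proof. unfold pd; simpl. apply Deriv_eq. eapply dExt; [|apply dId]. intros; reflexivity. Qed.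

Lemma Bonnet_D k t : (INR k + 2) * pd 1 (S (S k)) t =
  (2 * INR k + 3) * Legendre (S k) t + (2 * INR k + 3) * t * pd 1 (S k) t
  - (INR k + 1) * pd 1 k t.
Proof.
  assert (0 <= INR k) by apply INR_pos.
  assert (E : pd 1 (S (S k)) t =
    ((2 * INR k + 3) * (1 * Legendre (S k) t + t * pd 1 (S k) t) - (INR k + 1) * pd 1 k t) / (INR k + 2)).
  { apply (D_unique_eq (Legendre (S (S k)))
      (fun t => ((2 * INR k + 3) * t * Legendre (S k) t - (INR k + 1) * Legendre k t) / (INR k + 2)) t).
    - intros; apply Leg_rec.
    - apply (pd_D 0).
    - eapply D_eqv.
      + unfold Rdiv. apply dMult; [|apply dConst].
        apply dMinus; apply dMult; try apply dConst; try apply (pd_D 0).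
        apply dMult; [apply dConst | apply dId].
      + cbv beta. field. lra. }
  rewrite E. field. lra.
Qed.

Lemma LegAB k t :
  t * pd 1 (S k) t - pd 1 k t = INR (S k) * Legendre (S k) t /\
  pd 1 (S k) t - t * pd 1 k t = INR (S k) * Legendre k t.
Proof.
  revert t. induction k as [|k IH]; intros t.
  - rewrite pd1_0, pd1_1, Leg1, Leg0. simpl. split; ring.
  - destruct (IH t) as [HA HB].
    assert (Hb := Bonnet_D k t).
    assert (Hr := Leg_rec k t).
    assert (0 <= INR k) by apply INR_pos.
    rewrite !S_INR in *.
    assert (HB2 : pd 1 (S (S k)) t - t * pd 1 (S k) t = (INR k + 1 + 1) * Legendre (S k) t).
    { apply (Rmult_eq_reg_l (INR k + 2)); [|lra].
      rewrite Rmult_minus_distr_l, Hb.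
      replace (pd 1 k t) with (t * pd 1 (S k) t - (INR k + 1) * Legendre (S k) t) by lra.
      ring. }
    split; auto.
    assert (HC : (1 - t^2) * pd 1 (S k) t = (INR k + 1) * (Legendre k t - t * Legendre (S k) t)).
    { replace ((1 - t^2) * pd 1 (S k) t) with ((pd 1 (S k) t - t * pd 1 k t) - t * (t * pd 1 (S k) t - pd 1 k t)) by ring.
      rewrite HA, HB. ring. }
    assert (HP2 : (INR k + 2) * Legendre (S (S k)) t = (2 * INR k + 3) * t * Legendre (S k) t - (INR k + 1) * Legendre k t).
    { rewrite Hr. field. lra. }
    replace (pd 1 (S (S k)) t) with (t * pd 1 (S k) t + (INR k + 1 + 1) * Legendre (S k) t) by lra.
    apply (Rmult_eq_reg_l (INR k + 2)); [|lra].
    replace ((INR k + 2) * (t * (t * pd 1 (S k) t + (INR k + 1 + 1) * Legendre (S k) t) - pd 1 (S k) t))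
      with (- (INR k + 2) * ((1 - t^2) * pd 1 (S k) t) + (INR k + 2) * (INR k + 2) * t * Legendre (S k) t) by ring.
    rewrite HC.
    replace ((INR k + 2) * ((INR k + 1 + 1) * Legendre (S (S k)) t)) with ((INR k + 2) * ((INR k + 2) * Legendre (S (S k)) t)) by ring.
    rewrite HP2. ring.
Qed.

Lemma Leg_ODE N t : (1 - t^2) * pd 2 N t - 2 * t * pd 1 N t + INR N * (INR N + 1) * pd 0 N t = 0.
Proof.
  destruct N as [|k].
  - rewrite (pd_zero 2 0), (pd_zero 1 0) by lia. simpl; ring.
  - assert (HC : forall t, (1 - t^2) * pd 1 (S k) t = INR (S k) * (Legendre k t - t * Legendre (S k) t)).
    { intros s. destruct (LegAB k s) as [HA HB].
      replace ((1 - s^2) * pd 1 (S k) s) with ((pd 1 (S k) s - s * pd 1 k s) - s * (s * pd 1 (S k) s - pd 1 k s)) by ring.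
      rewrite HA, HB. ring. }
    assert (E2 : (-(2 * t) ) * pd 1 (S k) t + (1 - t^2) * pd 2 (S k) t =
       INR (S k) * (pd 1 k t - (Legendre (S k) t + t * pd 1 (S k) t))).
    { apply (D_unique_eq (fun t => (1 - t^2) * pd 1 (S k) t)
      (fun t => INR (S k) * (Legendre k t - t * Legendre (S k) t)) t); [exact HC| |].
      - eapply D_eqv; [apply dMult; [apply dMinus; [apply dConst| apply (dPow (fun t => t)); apply dId] | apply pd_D]|].
        simpl; ring.
      - eapply D_eqv; [apply dMult; [apply dConst | apply dMinus; [apply (pd_D 0) | apply dMult; [apply dId | apply (pd_D 0)]]]|].
        cbv beta; ring. }
    destruct (LegAB k t) as [HA _].
    rewrite pdO. 
    replace (pd 1 k t) with (t * pd 1 (S k) t - INR (S k) * Legendre (S k) t) in E2 by lra.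
    rewrite S_INR in *. nra.
Qed.

Lemma Assoc_ODE N l t : (1 - t^2) * pd (S (S l)) N t - 2 * (INR l + 1) * t * pd (S l) N t
   + (INR N * (INR N + 1) - INR l * (INR l + 1)) * pd l N t = 0.
Proof.
  revert t. induction l as [|l IH]; intros t.
  - assert (H := Leg_ODE N t). simpl INR. lra.
  - assert (E2 : (-(2 * t)) * pd (S (S l)) N t + (1 - t^2) * pd (S (S (S l))) N t
       - 2 * (INR l + 1) * (pd (S l) N t + t * pd (S (S l)) N t)
       + (INR N * (INR N + 1) - INR l * (INR l + 1)) * pd (S l) N t = 0).
    { eapply (D_unique_eq _ (fun _ => 0) t); [exact IH| |].
      - eapply D_eqv.
        + apply dPlus; [apply dMinus|].
          * apply dMult; [apply dMinus; [apply dConst| apply (dPow (fun t => t)); apply dId] | apply pd_D].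
          * apply dMult; [apply dMult; [apply dConst| apply dId] | apply pd_D].
          * apply dMult; [apply dConst | apply pd_D].
        + simpl; ring.
      - apply dConst. }
    rewrite S_INR. lra.
Qed.

Fixpoint apair (l : nat) (y1 y2 : R) : R * R :=
  match l with
  | O => (1, 0)
  | S k => let (a, b) := apair k y1 y2 in (y1 * a - y2 * b, y2 * a + y1 * b)
  end.
Definition Aa l y1 y2 := fst (apair l y1 y2).
Definition Bb l y1 y2 := snd (apair l y1 y2).
Lemma Aa0 y1 y2 : Aa 0 y1 y2 = 1. Proof. reflexivity. Qed.
Lemma Bb0 y1 y2 : Bb 0 y1 y2 = 0. Proof. reflexivity. Qed.
Lemma AaS k y1 y2 : Aa (S k) y1 y2 = y1 * Aa k y1 y2 - y2 * Bb k y1 y2.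
Proof. unfold Aa, Bb; simpl; destruct (apair k y1 y2); reflexivity. Qed.
Lemma BbS k y1 y2 : Bb (S k) y1 y2 = y2 * Aa k y1 y2 + y1 * Bb k y1 y2.
Proof. unfold Aa, Bb; simpl; destruct (apair k y1 y2); reflexivity. Qed.

Lemma cheb_rec a0 a1 k t :
  fst (chebPair a0 a1 (S (S k)) t) = 2 * t * fst (chebPair a0 a1 (S k) t) - fst (chebPair a0 a1 k t).
Proof. simpl. destruct (chebPair a0 a1 k t); reflexivity. Qed.
Lemma ChebT_rec k t : ChebT (S (S k)) t = 2 * t * ChebT (S k) t - ChebT k t.
Proof. apply cheb_rec. Qed.
Lemma ChebU_rec k t : ChebU (S (S k)) t = 2 * t * ChebU (S k) t - ChebU k t.
Proof. apply cheb_rec. Qed.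
Lemma ChebT0 t : ChebT 0 t = 1. Proof. reflexivity. Qed.
Lemma ChebT1 t : ChebT 1 t = t. Proof. reflexivity. Qed.
Lemma ChebU0 t : ChebU 0 t = 1. Proof. reflexivity. Qed.
Lemma ChebU1 t : ChebU 1 t = 2 * t. Proof. reflexivity. Qed.

Lemma ChebT_IsP k : IsP k (ChebT k) /\ IsP (S k) (ChebT (S k)).
Proof.
  induction k as [|k [H1 H2]].
  - split; [eapply IsP_ext; [apply (IsP_c 0 1)| intros; reflexivity]|].
    eapply IsP_ext; [apply IsP_x; apply (IsP_c 0 1)|]. intros; rewrite ChebT1; ring.
  - split; auto. eapply IsP_ext.
    + apply IsP_add; [apply (IsP_scal _ 2); apply IsP_x; exact H2|].
      apply (IsP_scal _ (-1)). apply IsP_S, IsP_S; exact H1.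
    + intros; rewrite ChebT_rec; ring.
Qed.
Lemma ChebU_IsP k : IsP k (ChebU k) /\ IsP (S k) (ChebU (S k)).
Proof.
  induction k as [|k [H1 H2]].
  - split; [eapply IsP_ext; [apply (IsP_c 0 1)| intros; reflexivity]|].
    eapply IsP_ext; [apply IsP_x; apply (IsP_c 0 2)|]. intros; rewrite ChebU1; ring.
  - split; auto. eapply IsP_ext.
    + apply IsP_add; [apply (IsP_scal _ 2); apply IsP_x; exact H2|].
      apply (IsP_scal _ (-1)). apply IsP_S, IsP_S; exact H1.
    + intros; rewrite ChebU_rec; ring.
Qed.

Lemma Aa_rec k y1 y2 : Aa (S (S k)) y1 y2 = 2 * y1 * Aa (S k) y1 y2 - (y1^2 + y2^2) * Aa k y1 y2.
Proof.
  rewrite (AaS (S k)), (BbS k), (AaS k). ring.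
Qed.
Lemma Bb_rec k y1 y2 : Bb (S (S k)) y1 y2 = 2 * y1 * Bb (S k) y1 y2 - (y1^2 + y2^2) * Bb k y1 y2.
Proof.
  rewrite (BbS (S k)), (AaS k), (BbS k). ring.
Qed.

Lemma rho_sq y1 y2 : rho y1 y2 ^ 2 = y1^2 + y2^2.
Proof. unfold rho. apply pow2_sqrt. nra. Qed.
Lemma rho_nonneg y1 y2 : 0 <= rho y1 y2.
Proof. unfold rho; apply sqrt_pos. Qed.
Lemma rho0 y1 y2 : rho y1 y2 = 0 -> y1 = 0 /\ y2 = 0.
Proof. intros H. assert (E := rho_sq y1 y2). rewrite H in E. nra. Qed.

Lemma ChebA l y1 y2 : rho y1 y2 ^ l * ChebT l (cos_th2 y1 y2) = Aa l y1 y2.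
Proof.
  unfold cos_th2. destruct (Req_dec_T (rho y1 y2) 0) as [H0|H0].
  - destruct (rho0 _ _ H0) as [-> ->]. rewrite H0. destruct l as [|l].
    + rewrite ChebT0, Aa0. simpl. ring.
    + rewrite AaS. simpl. ring.
  - set (r := rho y1 y2) in *.
    assert (Hr : r^2 = y1^2 + y2^2) by apply rho_sq.
    assert (HP : forall k, r ^ k * ChebT k (y1 / r) = Aa k y1 y2 /\
                          r ^ (S k) * ChebT (S k) (y1 / r) = Aa (S k) y1 y2).
    { induction k as [|k [IH1 IH2]].
      - split; [rewrite ChebT0, Aa0; simpl; ring|]. rewrite ChebT1, AaS, Aa0, Bb0. simpl. field. auto.
      - split; auto. rewrite ChebT_rec, Aa_rec, <- IH1, <- IH2, <- Hr. simpl. field. auto. }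
    exact (proj1 (HP _)).
Qed.

Lemma ChebB k y1 y2 : rho y1 y2 ^ (S k) * sin_th2 y1 y2 * ChebU k (cos_th2 y1 y2) = Bb (S k) y1 y2.
Proof.
  unfold cos_th2, sin_th2. destruct (Req_dec_T (rho y1 y2) 0) as [H0|H0].
  - destruct (rho0 _ _ H0) as [-> ->].
    assert (Z : forall j, Bb j 0 0 = 0).
    { induction j; [reflexivity| rewrite BbS, IHj; ring]. }
    rewrite Z. ring.
  - set (r := rho y1 y2) in *.
    assert (Hr : r^2 = y1^2 + y2^2) by apply rho_sq.
    assert (HP : forall k, r ^ (S k) * (y2 / r) * ChebU k (y1 / r) = Bb (S k) y1 y2 /\
                          r ^ (S (S k)) * (y2 / r) * ChebU (S k) (y1 / r) = Bb (S (S k)) y1 y2).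
    { clear k. intros k. induction k as [|k [IH1 IH2]].
      - rewrite ChebU0, ChebU1, !BbS, AaS, Aa0, Bb0. split; simpl; field; auto.
      - split; auto. rewrite ChebU_rec, Bb_rec, <- IH1, <- IH2, <- Hr. simpl. field. auto. }
    exact (proj1 (HP _)).
Qed.

Lemma radius_pos x0 x1 x2 : radius x0 x1 x2 <> 0 -> 0 < radius x0 x1 x2.
Proof. intros H. unfold radius in *. assert (0 <= sqrt (x0^2+x1^2+x2^2)) by apply sqrt_pos. lra. Qed.
Lemma radius_sq x0 x1 x2 : radius x0 x1 x2 ^ 2 = x0^2 + x1^2 + x2^2.
Proof. unfold radius. apply pow2_sqrt. nra. Qed.

Lemma sqrt_sin x0 x1 x2 : radius x0 x1 x2 <> 0 ->
  sqrt (1 - (x0 / radius x0 x1 x2) ^ 2) = rho x1 x2 / radius x0 x1 x2.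
Proof.
  intros H. assert (Hp := radius_pos _ _ _ H).
  replace (1 - (x0 / radius x0 x1 x2) ^ 2) with ((rho x1 x2 / radius x0 x1 x2) ^ 2).
  - apply sqrt_pow2. unfold Rdiv; apply Rmult_le_pos; [apply rho_nonneg| left; apply Rinv_0_lt_compat; auto].
  - unfold Rdiv. rewrite !Rpow_mult_distr, rho_sq.
    assert (E := radius_sq x0 x1 x2).
    rewrite pow_inv. rewrite E. field. rewrite <- E. apply pow_nonzero. auto.
Qed.

Definition KK (N l : nat) (r : R) := r ^ N * (/ r) ^ l.

Lemma u_formula l N x0 x1 x2 : radius x0 x1 x2 <> 0 ->
  radius x0 x1 x2 ^ N * sphU l N x0 x1 x2 =
  KK N l (radius x0 x1 x2) * pd l N (x0 / radius x0 x1 x2) * Aa l x1 x2.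
Proof.
  intros H. unfold sphU, assocLegendre, cos_th1.
  destruct (Req_dec_T (radius x0 x1 x2) 0) as [E|_]; [contradiction|].
  rewrite sqrt_sin by auto. rewrite <- ChebA. unfold KK, pd, Rdiv.
  rewrite Rpow_mult_distr. ring.
Qed.

Lemma v_formula k N x0 x1 x2 : radius x0 x1 x2 <> 0 ->
  radius x0 x1 x2 ^ N * sphV (S k) N x0 x1 x2 =
  KK N (S k) (radius x0 x1 x2) * pd (S k) N (x0 / radius x0 x1 x2) * Bb (S k) x1 x2.
Proof.
  intros H. unfold sphV, assocLegendre, cos_th1.
  destruct (Req_dec_T (radius x0 x1 x2) 0) as [E|_]; [contradiction|].
  rewrite sqrt_sin by auto. rewrite <- ChebB. unfold KK, pd, Rdiv.
  replace (S k - 1)%nat with k by lia.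
  rewrite Rpow_mult_distr. ring.
Qed.

Lemma AB_D (y1 y2 : R -> R) t d1 d2 :
  derivable_pt_lim y1 t d1 -> derivable_pt_lim y2 t d2 -> forall l,
  derivable_pt_lim (fun s => Aa l (y1 s) (y2 s)) t
     (INR l * (Aa (pred l) (y1 t) (y2 t) * d1 - Bb (pred l) (y1 t) (y2 t) * d2)) /\
  derivable_pt_lim (fun s => Bb l (y1 s) (y2 s)) t
     (INR l * (Bb (pred l) (y1 t) (y2 t) * d1 + Aa (pred l) (y1 t) (y2 t) * d2)).
Proof.
  intros H1 H2 l. induction l as [|l [IA IB]].
  - split; (eapply D_eqv; [eapply dExt; [intros s; symmetry; first [apply Aa0|apply Bb0]| apply dConst] | simpl; ring]).
  - split.
    + eapply dExt; [intros s; symmetry; apply AaS|].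
      eapply D_eqv; [apply dMinus; [apply dMult; [exact H1|exact IA] | apply dMult; [exact H2|exact IB]]|]; cbv beta.
      destruct l as [|l].
      * rewrite !Aa0, !Bb0. simpl. ring.
      * simpl pred. rewrite (AaS l), (BbS l). rewrite !S_INR. simpl pred in IA. ring.
    + eapply dExt; [intros s; symmetry; apply BbS|].
      eapply D_eqv; [apply dPlus; [apply dMult; [exact H2|exact IA] | apply dMult; [exact H1|exact IB]]|]; cbv beta.
      destruct l as [|l].
      * rewrite !Aa0, !Bb0. simpl. ring.
      * simpl pred. rewrite (AaS l), (BbS l). rewrite !S_INR. ring.
Qed.

Definition Fu l N y0 y1 y2 := KK N l (radius y0 y1 y2) * pd l N (y0 / radius y0 y1 y2) * Aa l y1 y2.
Definition Fv l N y0 y1 y2 := KK N l (radius y0 y1 y2) * pd l N (y0 / radius y0 y1 y2) * Bb l y1 y2.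

Lemma KP_D (y0 y1 y2 : R -> R) t d0 d1 d2 l N :
  derivable_pt_lim y0 t d0 -> derivable_pt_lim y1 t d1 -> derivable_pt_lim y2 t d2 ->
  radius (y0 t) (y1 t) (y2 t) <> 0 ->
  let r := radius (y0 t) (y1 t) (y2 t) in
  let c := y0 t / r in
  let rd := (y0 t * d0 + y1 t * d1 + y2 t * d2) / r in
  derivable_pt_lim (fun s => KK N l (radius (y0 s) (y1 s) (y2 s)) * pd l N (y0 s / radius (y0 s) (y1 s) (y2 s))) t
    (KK N l r / r * ((INR N - INR l) * rd * pd l N c + pd (S l) N c * (d0 - c * rd))).
Proof.
  intros H0 H1 H2 Hr r c rd.
  assert (Hp : 0 < r) by (apply radius_pos; auto).
  assert (Hsq : r ^ 2 = y0 t ^ 2 + y1 t ^ 2 + y2 t ^ 2) by apply radius_sq.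
  assert (HR : derivable_pt_lim (fun s => radius (y0 s) (y1 s) (y2 s)) t rd).
  { unfold radius. eapply D_eqv.
    - apply dSqrt.
      + apply dPlus; [apply dPlus|]; apply dPow; eauto.
      + fold (radius (y0 t) (y1 t) (y2 t)). fold r. rewrite <- Hsq. apply pow_lt; auto.
    - unfold rd, r, radius in *. simpl pred. simpl INR. field. lra. }
  assert (HI : derivable_pt_lim (fun s => / radius (y0 s) (y1 s) (y2 s)) t (- rd / r ^ 2)).
  { apply dInv; auto. }
  unfold KK. eapply D_eqv.
  - apply dMult.
    + apply dMult; apply dPow; [exact HR | exact HI].
    + apply (dComp (pd l N) (fun s => y0 s / radius (y0 s) (y1 s) (y2 s))).
      * unfold Rdiv. apply dMult; [exact H0 | exact HI].
      * apply pd_D.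
  - unfold c, rd, r in *. unfold Rdiv.
    destruct N as [|N]; destruct l as [|l]; cbn [pow pred]; rewrite ?S_INR; simpl INR; field; lra.
Qed.

Lemma Fu_D (y0 y1 y2 : R -> R) t d0 d1 d2 l N :
  derivable_pt_lim y0 t d0 -> derivable_pt_lim y1 t d1 -> derivable_pt_lim y2 t d2 ->
  radius (y0 t) (y1 t) (y2 t) <> 0 ->
  let r := radius (y0 t) (y1 t) (y2 t) in
  let c := y0 t / r in
  let rd := (y0 t * d0 + y1 t * d1 + y2 t * d2) / r in
  derivable_pt_lim (fun s => Fu l N (y0 s) (y1 s) (y2 s)) t
    (KK N l r / r * ((INR N - INR l) * rd * pd l N c + pd (S l) N c * (d0 - c * rd)) * Aa l (y1 t) (y2 t)
     + KK N l r * pd l N c * (INR l * (Aa (pred l) (y1 t) (y2 t) * d1 - Bb (pred l) (y1 t) (y2 t) * d2))) /\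
  derivable_pt_lim (fun s => Fv l N (y0 s) (y1 s) (y2 s)) t
    (KK N l r / r * ((INR N - INR l) * rd * pd l N c + pd (S l) N c * (d0 - c * rd)) * Bb l (y1 t) (y2 t)
     + KK N l r * pd l N c * (INR l * (Bb (pred l) (y1 t) (y2 t) * d1 + Aa (pred l) (y1 t) (y2 t) * d2))).
Proof.
  intros H0 H1 H2 Hr r c rd.
  destruct (AB_D y1 y2 t d1 d2 H1 H2 l) as [HA HB].
  assert (HK := KP_D y0 y1 y2 t d0 d1 d2 l N H0 H1 H2 Hr).
  split; unfold Fu, Fv; eapply D_eqv; try (apply dMult; [exact HK | eauto]); reflexivity.
Qed.

Lemma radius0 a b c : radius a b c = 0 -> a = 0 /\ b = 0 /\ c = 0.
Proof.
  intros H. assert (E := radius_sq a b c). rewrite H in E. simpl in E. nra.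
Qed.
Lemma radius_213 a b c : radius a b c = radius b a c.
Proof. unfold radius; f_equal; ring. Qed.
Lemma radius_312 a b c : radius a b c = radius c a b.
Proof. unfold radius; f_equal; ring. Qed.

Lemma nbhd a b c : radius a b c <> 0 -> exists d, 0 < d /\ forall t, Rabs (t - a) < d -> radius t b c <> 0.
Proof.
  intros H. destruct (Req_dec a 0) as [Ha|Ha].
  - exists 1. split; [lra|]. intros t _ E. apply radius0 in E. destruct E as [_ [Hb Hc]].
    subst. apply H. unfold radius. replace (0^2+0^2+0^2) with 0 by ring. apply sqrt_0.
  - exists (Rabs a). split; [apply Rabs_pos_lt; auto|]. intros t Ht E. apply radius0 in E.
    destruct E as [-> _]. rewrite Rminus_0_l, Rabs_Ropp in Ht. lra.
Qed.

Lemma Deriv_local (f F : R -> R) x V d : 0 < d -> (forall t, Rabs (t - x) < d -> F t = f t) ->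
  derivable_pt_lim F x V -> Deriv f x = V.
Proof. intros Hd Heq H. apply Deriv_eq. eapply dLoc; eauto. Qed.

Definition fu l n := fun a b c => radius a b c ^ (n + 1) * sphU l (n + 1) a b c.
Definition fv l n := fun a b c => radius a b c ^ (n + 1) * sphV l (n + 1) a b c.

Definition pp N j x0 x1 x2 := pd j N (x0 / radius x0 x1 x2).
Definition cc x0 x1 x2 := x0 / radius x0 x1 x2.
Definition al N j x0 x1 x2 := (INR N - INR j) * cc x0 x1 x2 * pp N j x0 x1 x2 + (1 - cc x0 x1 x2 ^ 2) * pp N (S j) x0 x1 x2.
Definition be N j x0 x1 x2 := (INR N - INR j) * pp N j x0 x1 x2 - cc x0 x1 x2 * pp N (S j) x0 x1 x2.
Definition KKp N j x0 x1 x2 := KK N j (radius x0 x1 x2).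
Definition d0u N j x0 x1 x2 := KKp N j x0 x1 x2 / radius x0 x1 x2 * al N j x0 x1 x2 * Aa j x1 x2.
Definition d0v N j x0 x1 x2 := KKp N j x0 x1 x2 / radius x0 x1 x2 * al N j x0 x1 x2 * Bb j x1 x2.
Definition d1u N j x0 x1 x2 := KKp N j x0 x1 x2 / radius x0 x1 x2 ^ 2 * x1 * be N j x0 x1 x2 * Aa j x1 x2
   + KKp N j x0 x1 x2 * pp N j x0 x1 x2 * (INR j * Aa (pred j) x1 x2).
Definition d2u N j x0 x1 x2 := KKp N j x0 x1 x2 / radius x0 x1 x2 ^ 2 * x2 * be N j x0 x1 x2 * Aa j x1 x2
   - KKp N j x0 x1 x2 * pp N j x0 x1 x2 * (INR j * Bb (pred j) x1 x2).
Definition d1v N j x0 x1 x2 := KKp N j x0 x1 x2 / radius x0 x1 x2 ^ 2 * x1 * be N j x0 x1 x2 * Bb j x1 x2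
   + KKp N j x0 x1 x2 * pp N j x0 x1 x2 * (INR j * Bb (pred j) x1 x2).
Definition d2v N j x0 x1 x2 := KKp N j x0 x1 x2 / radius x0 x1 x2 ^ 2 * x2 * be N j x0 x1 x2 * Bb j x1 x2
   + KKp N j x0 x1 x2 * pp N j x0 x1 x2 * (INR j * Aa (pred j) x1 x2).


Lemma partials_u l n x0 x1 x2 : radius x0 x1 x2 <> 0 ->
  pd0 (fu l n) x0 x1 x2 = d0u (n+1) l x0 x1 x2 /\
  pd1 (fu l n) x0 x1 x2 = d1u (n+1) l x0 x1 x2 /\
  pd2 (fu l n) x0 x1 x2 = d2u (n+1) l x0 x1 x2.
Proof.
  intros Hr. assert (Hp := radius_pos _ _ _ Hr).
  split; [|split].
  - destruct (nbhd x0 x1 x2 Hr) as [d [Hd Hn]].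
    unfold pd0. apply (Deriv_local _ (fun t => Fu l (n+1) t x1 x2) x0 _ d Hd).
    + intros t Ht. unfold fu. rewrite u_formula; auto.
    + destruct (Fu_D (fun t => t) (fun _ => x1) (fun _ => x2) x0 1 0 0 l (n+1) (dId _) (dConst _ _) (dConst _ _) Hr) as [H _].
      eapply D_eqv; [exact H|]. cbv beta zeta.
      unfold d0u, KKp, al, cc, pp. field. auto.
  - destruct (nbhd x1 x0 x2) as [d [Hd Hn]]; [rewrite <- radius_213; auto|].
    unfold pd1. apply (Deriv_local _ (fun t => Fu l (n+1) x0 t x2) x1 _ d Hd).
    + intros t Ht. unfold fu. rewrite u_formula; auto. rewrite radius_213; auto.
    + destruct (Fu_D (fun _ => x0) (fun t => t) (fun _ => x2) x1 0 1 0 l (n+1) (dConst _ _) (dId _) (dConst _ _) Hr) as [H _].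
      eapply D_eqv; [exact H|]. cbv beta zeta.
      unfold d1u, KKp, be, cc, pp. field. auto.
  - destruct (nbhd x2 x0 x1) as [d [Hd Hn]]; [rewrite <- radius_312; auto|].
    unfold pd2. apply (Deriv_local _ (fun t => Fu l (n+1) x0 x1 t) x2 _ d Hd).
    + intros t Ht. unfold fu. rewrite u_formula; auto. rewrite radius_312; auto.
    + destruct (Fu_D (fun _ => x0) (fun _ => x1) (fun t => t) x2 0 0 1 l (n+1) (dConst _ _) (dConst _ _) (dId _) Hr) as [H _].
      eapply D_eqv; [exact H|]. cbv beta zeta.
      unfold d2u, KKp, be, cc, pp. field. auto.
Qed.

Lemma partials_v k n x0 x1 x2 : radius x0 x1 x2 <> 0 ->
  pd0 (fv (S k) n) x0 x1 x2 = d0v (n+1) (S k) x0 x1 x2 /\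
  pd1 (fv (S k) n) x0 x1 x2 = d1v (n+1) (S k) x0 x1 x2 /\
  pd2 (fv (S k) n) x0 x1 x2 = d2v (n+1) (S k) x0 x1 x2.
Proof.
  intros Hr. assert (Hp := radius_pos _ _ _ Hr).
  split; [|split].
  - destruct (nbhd x0 x1 x2 Hr) as [d [Hd Hn]].
    unfold pd0. apply (Deriv_local _ (fun t => Fv (S k) (n+1) t x1 x2) x0 _ d Hd).
    + intros t Ht. unfold fv. rewrite v_formula; auto.
    + destruct (Fu_D (fun t => t) (fun _ => x1) (fun _ => x2) x0 1 0 0 (S k) (n+1) (dId _) (dConst _ _) (dConst _ _) Hr) as [_ H].
      eapply D_eqv; [exact H|]. cbv beta zeta.
      unfold d0v, KKp, al, cc, pp. field. auto.
  - destruct (nbhd x1 x0 x2) as [d [Hd Hn]]; [rewrite <- radius_213; auto|].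
    unfold pd1. apply (Deriv_local _ (fun t => Fv (S k) (n+1) x0 t x2) x1 _ d Hd).
    + intros t Ht. unfold fv. rewrite v_formula; auto. rewrite radius_213; auto.
    + destruct (Fu_D (fun _ => x0) (fun t => t) (fun _ => x2) x1 0 1 0 (S k) (n+1) (dConst _ _) (dId _) (dConst _ _) Hr) as [_ H].
      eapply D_eqv; [exact H|]. cbv beta zeta.
      unfold d1v, KKp, be, cc, pp. field. auto.
  - destruct (nbhd x2 x0 x1) as [d [Hd Hn]]; [rewrite <- radius_312; auto|].
    unfold pd2. apply (Deriv_local _ (fun t => Fv (S k) (n+1) x0 x1 t) x2 _ d Hd).
    + intros t Ht. unfold fv. rewrite v_formula; auto. rewrite radius_312; auto.
    + destruct (Fu_D (fun _ => x0) (fun _ => x1) (fun t => t) x2 0 0 1 (S k) (n+1) (dConst _ _) (dConst _ _) (dId _) Hr) as [_ H].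
      eapply D_eqv; [exact H|]. cbv beta zeta.
      unfold d2v, KKp, be, cc, pp. field. auto.
Qed.

Definition XF n l x0 x1 x2 :=
  mkQ (d0u (n+1) l x0 x1 x2 / 2) (- d1u (n+1) l x0 x1 x2 / 2) (- d2u (n+1) l x0 x1 x2 / 2) 0.
Definition YF n l x0 x1 x2 :=
  mkQ (d0v (n+1) l x0 x1 x2 / 2) (- d1v (n+1) l x0 x1 x2 / 2) (- d2v (n+1) l x0 x1 x2 / 2) 0.

Lemma pp_zero n j x0 x1 x2 : (n + 1 < j)%nat -> pp (n+1) j x0 x1 x2 = 0.
Proof. intros; unfold pp; apply pd_zero; auto. Qed.

Lemma Xdag_form l n x0 x1 x2 : radius x0 x1 x2 <> 0 -> (l <= n + 2)%nat ->
  Xdag l n x0 x1 x2 = XF n l x0 x1 x2.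
Proof.
  intros Hr Hl. unfold Xdag, XF.
  destruct (Nat.leb (n + 2) l) eqn:E.
  - apply Nat.leb_le in E. assert (l = n + 2)%nat by lia. subst l.
    unfold d0u, d1u, d2u, al, be.
    rewrite !pp_zero by lia. unfold qzero. f_equal; field; apply radius_pos in Hr; lra.
  - destruct (partials_u l n x0 x1 x2 Hr) as [H0 [H1 H2]].
    unfold halfDbar. change (fun a b c => radius a b c ^ (n + 1) * sphU l (n + 1) a b c) with (fu l n).
    rewrite H0, H1, H2. reflexivity.
Qed.

Lemma Ydag_form l n x0 x1 x2 : radius x0 x1 x2 <> 0 -> (l <= n + 2)%nat ->
  Ydag l n x0 x1 x2 = YF n l x0 x1 x2.
Proof.
  intros Hr Hl. assert (Hp := radius_pos _ _ _ Hr). unfold Ydag, YF.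
  destruct l as [|k].
  - simpl. unfold d0v, d1v, d2v. rewrite Bb0. simpl INR. unfold qzero. f_equal; field; lra.
  - simpl Nat.eqb. destruct (Nat.leb (n + 2) (S k)) eqn:E.
    + apply Nat.leb_le in E. assert (S k = n + 2)%nat by lia. rewrite H.
      unfold d0v, d1v, d2v, al, be.
      rewrite !pp_zero by lia. unfold qzero. f_equal; field; lra.
    + destruct (partials_v k n x0 x1 x2 Hr) as [H0 [H1 H2]].
      unfold halfDbar. change (fun a b c => radius a b c ^ (n + 1) * sphV (S k) (n + 1) a b c) with (fv (S k) n).
      rewrite H0, H1, H2. reflexivity.
Qed.

Lemma ALG (nn mm r KM KL KU al0 be0 al1 be1 ga1 al2 be2 ga2 aL bL aM bM aU bU
  u0L u1L u2L v0L v1L v2L u0M u1M u2M v0M v1M v2M u0U u1U u2U v0U v1U v2U : R) :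
  r <> 0 -> nn + mm + 2 <> 0 ->
  KL = KM * r -> KU = KM / r ->
  u0L = KL / r * al0 * aL -> v0L = KL / r * al0 * bL ->
  u1L = v2L + KL / r^2 * be0 * aM -> u2L = - v1L + KL / r^2 * be0 * bM ->
  u0M = KM / r * al1 * aM -> v0M = KM / r * al1 * bM ->
  u1M - v2M = KM / r^2 * be1 * aU -> u2M + v1M = KM / r^2 * be1 * bU ->
  u1M + v2M = KM * ga1 * aL -> v1M - u2M = KM * ga1 * bL ->
  u0U = KU / r * al2 * aU -> v0U = KU / r * al2 * bU ->
  u1U = - v2U + KU * ga2 * aM -> v1U = u2U + KU * ga2 * bM ->
  al1 = - (nn + 1 + mm) * be0 -> al2 = - (nn + 1 + mm + 1) * be1 ->
  ga2 = - (nn + 1 + mm + 1) * (nn + 1 + mm) * be0 -> ga1 = (nn + 1 + mm) * al0 ->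
  let X0 := mkQ (u0L/2) (-u1L/2) (-u2L/2) 0 in
  let Y0 := mkQ (v0L/2) (-v1L/2) (-v2L/2) 0 in
  let X1 := mkQ (u0M/2) (-u1M/2) (-u2M/2) 0 in
  let Y1 := mkQ (v0M/2) (-v1M/2) (-v2M/2) 0 in
  let X2 := mkQ (u0U/2) (-u1U/2) (-u2U/2) 0 in
  let Y2 := mkQ (v0U/2) (-v1U/2) (-v2U/2) 0 in
  X1 = qadd (qscal (- (nn + mm + 1) / 2) (qsub (qmul X0 qe1) (qmul Y0 qe2)))
            (qscal (/ (2 * (nn + mm + 2))) (qadd (qmul X2 qe1) (qmul Y2 qe2)))
  /\
  Y1 = qadd (qscal (- (nn + mm + 1) / 2) (qadd (qmul Y0 qe1) (qmul X0 qe2)))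
            (qscal (/ (2 * (nn + mm + 2))) (qsub (qmul Y2 qe1) (qmul X2 qe2))).
Proof.
  intros Hr Hnm HKL HKU hu0L hv0L hu1L hu2L hu0M hv0M hRD hID hRB hIB hu0U hv0U hu1U hv1U E1 E2 E3 E4.
  assert (u1M = (KM / r^2 * be1 * aU + KM * ga1 * aL) / 2) by lra.
  assert (v2M = (KM * ga1 * aL - KM / r^2 * be1 * aU) / 2) by lra.
  assert (u2M = (KM / r^2 * be1 * bU - KM * ga1 * bL) / 2) by lra.
  assert (v1M = (KM / r^2 * be1 * bU + KM * ga1 * bL) / 2) by lra.
  clear hRD hID hRB hIB.
  subst. cbv zeta. unfold qadd, qsub, qscal, qmul, qopp, qe1, qe2; simpl.
  split; f_equal; field; auto.
Qed.

Lemma ALG0 (nn r KM KL al0 be0 al1 ga1 x1 x2 u0L u1L u2L u0M u1M u2M v0M v1M v2M : R) :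
  r <> 0 -> nn + 2 <> 0 ->
  KL = KM * r ->
  u0L = KL / r * al0 * 1 ->
  u1L = KL / r^2 * x1 * be0 * 1 + KL * 0 ->
  u2L = KL / r^2 * x2 * be0 * 1 - KL * 0 ->
  u0M = KM / r * al1 * x1 -> v0M = KM / r * al1 * x2 ->
  u1M + v2M = KM * ga1 * 1 -> v1M - u2M = KM * ga1 * 0 ->
  al1 = - (nn + 1 + 1) * be0 -> ga1 = (nn + 1 + 1) * al0 ->
  mkQ (u0L/2) (-u1L/2) (-u2L/2) 0 =
  qscal (/ (nn + 2)) (qadd (qmul (mkQ (u0M/2) (-u1M/2) (-u2M/2) 0) qe1)
                           (qmul (mkQ (v0M/2) (-v1M/2) (-v2M/2) 0) qe2)).
Proof.
  intros Hr Hn HKL hu0L hu1L hu2L hu0M hv0M hRB hIB E1 E4.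
  assert (u1M = KM * ga1 - v2M) by lra.
  assert (v1M = u2M) by lra.
  clear hRB hIB. subst.
  unfold qadd, qsub, qscal, qmul, qopp, qe1, qe2; simpl.
  f_equal; field; auto.
Qed.

Definition ga N j x0 x1 x2 := (1 - cc x0 x1 x2 ^ 2) * be N j x0 x1 x2 + 2 * INR j * pp N j x0 x1 x2.

Lemma KK_S N j x0 x1 x2 : radius x0 x1 x2 <> 0 ->
  KKp N (S j) x0 x1 x2 = KKp N j x0 x1 x2 / radius x0 x1 x2.
Proof. intros. unfold KKp, KK. simpl. field. auto. Qed.

Lemma RD N j x0 x1 x2 : d1u N j x0 x1 x2 - d2v N j x0 x1 x2 =
  KKp N j x0 x1 x2 / radius x0 x1 x2 ^ 2 * be N j x0 x1 x2 * Aa (S j) x1 x2.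
Proof. unfold d1u, d2v. rewrite AaS. ring. Qed.
Lemma ID N j x0 x1 x2 : d2u N j x0 x1 x2 + d1v N j x0 x1 x2 =
  KKp N j x0 x1 x2 / radius x0 x1 x2 ^ 2 * be N j x0 x1 x2 * Bb (S j) x1 x2.
Proof. unfold d2u, d1v. rewrite BbS. ring. Qed.

Lemma constraint x0 x1 x2 : radius x0 x1 x2 <> 0 ->
  x1 ^ 2 + x2 ^ 2 = radius x0 x1 x2 ^ 2 * (1 - cc x0 x1 x2 ^ 2).
Proof.
  intros Hr. unfold cc. assert (E := radius_sq x0 x1 x2).
  unfold Rdiv. rewrite Rpow_mult_distr, pow_inv.
  replace (x1^2+x2^2) with (radius x0 x1 x2 ^ 2 - x0^2) by lra. field. auto.
Qed.

Lemma RB N i x0 x1 x2 : radius x0 x1 x2 <> 0 ->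
  d1u N (S i) x0 x1 x2 + d2v N (S i) x0 x1 x2 =
  KKp N (S i) x0 x1 x2 * ga N (S i) x0 x1 x2 * Aa i x1 x2.
Proof.
  intros Hr. assert (C := constraint x0 x1 x2 Hr).
  unfold d1u, d2v, ga. simpl pred. rewrite (AaS i), (BbS i).
  set (r := radius x0 x1 x2) in *.
  transitivity (KKp N (S i) x0 x1 x2 / r ^ 2 * be N (S i) x0 x1 x2 * ((x1^2 + x2^2) * Aa i x1 x2)
     + 2 * KKp N (S i) x0 x1 x2 * pp N (S i) x0 x1 x2 * INR (S i) * Aa i x1 x2); [ring|].
  rewrite C. field. apply radius_pos in Hr. unfold r. lra.
Qed.
Lemma IB N i x0 x1 x2 : radius x0 x1 x2 <> 0 ->
  d1v N (S i) x0 x1 x2 - d2u N (S i) x0 x1 x2 =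
  KKp N (S i) x0 x1 x2 * ga N (S i) x0 x1 x2 * Bb i x1 x2.
Proof.
  intros Hr. assert (C := constraint x0 x1 x2 Hr).
  unfold d1v, d2u, ga. simpl pred. rewrite (AaS i), (BbS i).
  set (r := radius x0 x1 x2) in *.
  transitivity (KKp N (S i) x0 x1 x2 / r ^ 2 * be N (S i) x0 x1 x2 * ((x1^2 + x2^2) * Bb i x1 x2)
     + 2 * KKp N (S i) x0 x1 x2 * pp N (S i) x0 x1 x2 * INR (S i) * Bb i x1 x2); [ring|].
  rewrite C. field. apply radius_pos in Hr. unfold r. lra.
Qed.

Lemma ODEp N j x0 x1 x2 :
  (1 - cc x0 x1 x2 ^ 2) * pp N (S (S j)) x0 x1 x2 - 2 * (INR j + 1) * cc x0 x1 x2 * pp N (S j) x0 x1 x2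
  + (INR N * (INR N + 1) - INR j * (INR j + 1)) * pp N j x0 x1 x2 = 0.
Proof. unfold pp, cc. apply Assoc_ODE. Qed.

Lemma EQ1 N k x0 x1 x2 : al N (S k) x0 x1 x2 = - (INR N + INR (S k)) * be N k x0 x1 x2.
Proof.
  assert (H := ODEp N k x0 x1 x2). unfold al, be. rewrite S_INR in *.
  set (c := cc x0 x1 x2) in *. set (p0 := pp N k x0 x1 x2) in *.
  set (p1 := pp N (S k) x0 x1 x2) in *. set (p2 := pp N (S (S k)) x0 x1 x2) in *.
  lra.
Qed.
Lemma EQ4 N k x0 x1 x2 : ga N (S k) x0 x1 x2 = (INR N + INR (S k)) * al N k x0 x1 x2.
Proof.
  assert (H := ODEp N k x0 x1 x2). unfold ga, al, be. rewrite S_INR in *.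
  set (c := cc x0 x1 x2) in *. set (p0 := pp N k x0 x1 x2) in *.
  set (p1 := pp N (S k) x0 x1 x2) in *. set (p2 := pp N (S (S k)) x0 x1 x2) in *.
  apply (f_equal (fun z => c * z)) in H.
  lra.
Qed.
Lemma EQ3 N k x0 x1 x2 : ga N (S (S k)) x0 x1 x2 = - (INR N + INR (S k) + 1) * (INR N + INR (S k)) * be N k x0 x1 x2.
Proof.
  assert (H := ODEp N k x0 x1 x2). assert (H' := ODEp N (S k) x0 x1 x2).
  unfold ga, be. rewrite !S_INR in *.
  set (c := cc x0 x1 x2) in *. set (p0 := pp N k x0 x1 x2) in *.
  set (p1 := pp N (S k) x0 x1 x2) in *. set (p2 := pp N (S (S k)) x0 x1 x2) in *.
  set (p3 := pp N (S (S (S k))) x0 x1 x2) in *.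
  apply (f_equal (fun z => c * z)) in H'.
  apply (f_equal (fun z => (INR N + INR k + 2) * z)) in H.
  lra.
Qed.

Lemma INRN n : INR (n + 1) = INR n + 1.
Proof. rewrite plus_INR; reflexivity. Qed.

Lemma main_first n x0 x1 x2 : radius x0 x1 x2 <> 0 ->
  Xdag 0 n x0 x1 x2 =
        qscal (/ (INR n + 2))
          (qadd (qmul (Xdag 1 n x0 x1 x2) qe1) (qmul (Ydag 1 n x0 x1 x2) qe2)).
Proof.
  intros Hr. assert (Hp := radius_pos _ _ _ Hr).
  rewrite (Xdag_form 0), (Xdag_form 1), (Ydag_form 1) by (auto; lia).
  unfold XF, YF.
  assert (0 <= INR n) by apply pos_INR.
  apply (ALG0 (INR n) (radius x0 x1 x2) (KKp (n+1) 1 x0 x1 x2) (KKp (n+1) 0 x0 x1 x2)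
     (al (n+1) 0 x0 x1 x2) (be (n+1) 0 x0 x1 x2) (al (n+1) 1 x0 x1 x2) (ga (n+1) 1 x0 x1 x2) x1 x2).
  - auto.
  - lra.
  - rewrite (KK_S (n+1) 0 x0 x1 x2 Hr). field. auto.
  - unfold d0u. rewrite Aa0. reflexivity.
  - unfold d1u. rewrite Aa0. simpl INR. ring.
  - unfold d2u. rewrite Aa0. simpl INR. ring.
  - unfold d0u. rewrite AaS, Aa0, Bb0. ring.
  - unfold d0v. rewrite BbS, Aa0, Bb0. ring.
  - rewrite (RB _ 0) by auto. rewrite Aa0. reflexivity.
  - rewrite (IB _ 0) by auto. rewrite Bb0. reflexivity.
  - rewrite (EQ1 _ 0). rewrite INRN. simpl INR. ring.
  - rewrite (EQ4 _ 0). rewrite INRN. simpl INR. ring.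
Qed.

Lemma main_rec n x0 x1 x2 m : radius x0 x1 x2 <> 0 -> (1 <= m <= n + 1)%nat ->
        Xdag m n x0 x1 x2 =
          qadd
            (qscal (- (INR n + INR m + 1) / 2)
               (qsub (qmul (Xdag (m - 1) n x0 x1 x2) qe1)
                     (qmul (Ydag (m - 1) n x0 x1 x2) qe2)))
            (qscal (/ (2 * (INR n + INR m + 2)))
               (qadd (qmul (Xdag (m + 1) n x0 x1 x2) qe1)
                     (qmul (Ydag (m + 1) n x0 x1 x2) qe2)))
        /\
        Ydag m n x0 x1 x2 =
          qadd
            (qscal (- (INR n + INR m + 1) / 2)
               (qadd (qmul (Ydag (m - 1) n x0 x1 x2) qe1)
                     (qmul (Xdag (m - 1) n x0 x1 x2) qe2)))
            (qscal (/ (2 * (INR n + INR m + 2)))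
               (qsub (qmul (Ydag (m + 1) n x0 x1 x2) qe1)
                     (qmul (Xdag (m + 1) n x0 x1 x2) qe2))).
Proof.
  intros Hr Hm. assert (Hp := radius_pos _ _ _ Hr).
  destruct m as [|k]; [lia|].
  replace (S k - 1)%nat with k by lia. replace (S k + 1)%nat with (S (S k)) by lia.
  rewrite (Xdag_form k), (Xdag_form (S k)), (Xdag_form (S (S k))),
          (Ydag_form k), (Ydag_form (S k)), (Ydag_form (S (S k))) by (auto; lia).
  unfold XF, YF.
  assert (0 <= INR n) by apply pos_INR. assert (0 <= INR (S k)) by apply pos_INR.
  set (N := (n + 1)%nat).
  apply (ALG (INR n) (INR (S k)) (radius x0 x1 x2) (KKp N (S k) x0 x1 x2) (KKp N k x0 x1 x2)
     (KKp N (S (S k)) x0 x1 x2)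
     (al N k x0 x1 x2) (be N k x0 x1 x2) (al N (S k) x0 x1 x2) (be N (S k) x0 x1 x2)
     (ga N (S k) x0 x1 x2) (al N (S (S k)) x0 x1 x2) (be N (S (S k)) x0 x1 x2) (ga N (S (S k)) x0 x1 x2)
     (Aa k x1 x2) (Bb k x1 x2) (Aa (S k) x1 x2) (Bb (S k) x1 x2) (Aa (S (S k)) x1 x2) (Bb (S (S k)) x1 x2)).
  - auto.
  - lra.
  - rewrite (KK_S N k) by auto. field. auto.
  - rewrite (KK_S N (S k)) by auto. reflexivity.
  - reflexivity.
  - reflexivity.
  - assert (HH := RD N k x0 x1 x2). lra.
  - assert (HH := ID N k x0 x1 x2). lra.
  - reflexivity.
  - reflexivity.
  - apply RD.
  - apply ID.
  - apply RB; auto.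
  - apply IB; auto.
  - reflexivity.
  - reflexivity.
  - assert (HH := RB N (S k) x0 x1 x2 Hr). lra.
  - assert (HH := IB N (S k) x0 x1 x2 Hr). lra.
  - rewrite EQ1. unfold N. rewrite INRN. ring.
  - rewrite (EQ1 N (S k)). unfold N. rewrite INRN, (S_INR (S k)). ring.
  - rewrite EQ3. unfold N. rewrite INRN. ring.
  - rewrite EQ4. unfold N. rewrite INRN. ring.
Qed.

Lemma pow_le1 x l : 0 <= x <= 1 -> 0 <= x ^ l <= 1.
Proof.
  intros H. induction l; simpl; [lra|]. split; [apply Rmult_le_pos; lra|].
  replace 1 with (1 * 1) by ring. apply Rmult_le_compat; lra.
Qed.

Lemma abs_le_sqrt a b : 0 <= b -> Rabs a <= sqrt (a ^ 2 + b).
Proof.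
  intros Hb. rewrite <- (sqrt_pow2 (Rabs a)) by apply Rabs_pos.
  apply sqrt_le_1_alt. rewrite pow2_abs. lra.
Qed.

Lemma div_le1 a r : Rabs a <= r -> r <> 0 -> Rabs (a / r) <= 1.
Proof.
  intros H Hr. assert (0 < r). { assert (0 <= Rabs a) by apply Rabs_pos. lra. }
  unfold Rdiv. rewrite Rabs_mult, Rabs_inv, (Rabs_pos_eq r) by lra.
  apply (Rmult_le_reg_r r); [lra|]. field_simplify; lra.
Qed.

Lemma cos_th1_bd x0 x1 x2 : Rabs (cos_th1 x0 x1 x2) <= 1.
Proof.
  unfold cos_th1. destruct (Req_dec_T (radius x0 x1 x2) 0) as [_|H].
  - rewrite Rabs_R1; lra.
  - apply div_le1; auto. unfold radius. rewrite Rplus_assoc. apply abs_le_sqrt. nra.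
Qed.
Lemma cos_th2_bd x1 x2 : Rabs (cos_th2 x1 x2) <= 1.
Proof.
  unfold cos_th2. destruct (Req_dec_T (rho x1 x2) 0) as [_|H].
  - rewrite Rabs_R1; lra.
  - apply div_le1; auto. unfold rho. apply abs_le_sqrt. nra.
Qed.
Lemma sin_th2_bd x1 x2 : Rabs (sin_th2 x1 x2) <= 1.
Proof.
  unfold sin_th2. destruct (Req_dec_T (rho x1 x2) 0) as [_|H].
  - rewrite Rabs_R0; lra.
  - apply div_le1; auto. unfold rho. rewrite Rplus_comm. apply abs_le_sqrt. nra.
Qed.
Lemma sqrt_bd c l : Rabs (sqrt (1 - c ^ 2) ^ l) <= 1.
Proof.
  rewrite Rabs_pos_eq; [|apply pow_le; apply sqrt_pos].
  apply pow_le1. split; [apply sqrt_pos|]. apply (Rle_trans _ (sqrt 1)); [apply sqrt_le_1_alt; nra | rewrite sqrt_1; lra].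
Qed.

Lemma sphU_bd l N : exists C, 0 <= C /\ forall a b c, Rabs (sphU l N a b c) <= C.
Proof.
  destruct (pd_bound l N) as [C1 H1].
  destruct (IsP_bound _ _ (proj1 (ChebT_IsP l))) as [C2 H2].
  exists (Rabs C1 * Rabs C2). split; [apply Rmult_le_pos; apply Rabs_pos|].
  intros a b c. unfold sphU, assocLegendre. rewrite !Rabs_mult.
  assert (A1 := sqrt_bd (cos_th1 a b c) l).
  assert (A2 := H1 _ (cos_th1_bd a b c)). assert (A3 := H2 _ (cos_th2_bd b c)).
  fold (pd l N) in *.
  assert (C1 <= Rabs C1) by apply RRle_abs. assert (C2 <= Rabs C2) by apply RRle_abs.
  assert (0 <= Rabs (sqrt (1 - cos_th1 a b c ^ 2) ^ l)) by apply Rabs_pos.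
  assert (0 <= Rabs (pd l N (cos_th1 a b c))) by apply Rabs_pos.
  assert (0 <= Rabs (ChebT l (cos_th2 b c))) by apply Rabs_pos.
  unfold pd in *.
  assert (Rabs (sqrt (1 - cos_th1 a b c ^ 2) ^ l) * Rabs (iterDeriv l (Legendre N) (cos_th1 a b c)) <= Rabs C1).
  { replace (Rabs C1) with (1 * Rabs C1) by ring. apply Rmult_le_compat; lra. }
  apply Rmult_le_compat; try lra. apply Rmult_le_pos; apply Rabs_pos.
Qed.

Lemma sphV_bd l N : exists C, 0 <= C /\ forall a b c, Rabs (sphV l N a b c) <= C.
Proof.
  destruct (pd_bound l N) as [C1 H1].
  destruct (IsP_bound _ _ (proj1 (ChebU_IsP (l - 1)))) as [C2 H2].
  exists (Rabs C1 * Rabs C2). split; [apply Rmult_le_pos; apply Rabs_pos|].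
  intros a b c. unfold sphV, assocLegendre. rewrite !Rabs_mult.
  assert (A1 := sqrt_bd (cos_th1 a b c) l).
  assert (A2 := H1 _ (cos_th1_bd a b c)). assert (A3 := H2 _ (cos_th2_bd b c)).
  assert (A4 := sin_th2_bd b c).
  assert (C1 <= Rabs C1) by apply RRle_abs. assert (C2 <= Rabs C2) by apply RRle_abs.
  assert (0 <= Rabs (sqrt (1 - cos_th1 a b c ^ 2) ^ l)) by apply Rabs_pos.
  assert (0 <= Rabs (pd l N (cos_th1 a b c))) by apply Rabs_pos.
  assert (0 <= Rabs (ChebU (l-1) (cos_th2 b c))) by apply Rabs_pos.
  assert (0 <= Rabs (sin_th2 b c)) by apply Rabs_pos.
  unfold pd in *.
  assert (Rabs (sqrt (1 - cos_th1 a b c ^ 2) ^ l) * Rabs (iterDeriv l (Legendre N) (cos_th1 a b c)) <= Rabs C1).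
  { replace (Rabs C1) with (1 * Rabs C1) by ring. apply Rmult_le_compat; lra. }
  assert (Rabs (sqrt (1 - cos_th1 a b c ^ 2) ^ l) * Rabs (iterDeriv l (Legendre N) (cos_th1 a b c)) * Rabs (sin_th2 b c) <= Rabs C1).
  { replace (Rabs C1) with (Rabs C1 * 1) by ring. apply Rmult_le_compat; try lra. apply Rmult_le_pos; lra. }
  apply Rmult_le_compat; try lra. apply Rmult_le_pos; [apply Rmult_le_pos|]; lra.
Qed.

Lemma zero_deriv (g : R -> R) C : 0 <= C -> (forall t, Rabs t <= 1 -> Rabs (g t) <= C * t ^ 2) -> g 0 = 0 ->
  derivable_pt_lim g 0 0.
Proof.
  intros HC Hb H0 eps Heps.
  assert (Hd : 0 < Rmin 1 (eps / (C + 1))).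
  { apply Rmin_pos; [lra|]. apply Rdiv_lt_0_compat; lra. }
  exists (mkposreal _ Hd). intros h Hh Hlt. simpl in Hlt.
  assert (Hh1 : Rabs h <= 1) by (apply Rlt_le; eapply Rlt_le_trans; [exact Hlt| apply Rmin_l]).
  assert (Hh2 : Rabs h < eps / (C + 1)) by (eapply Rlt_le_trans; [exact Hlt| apply Rmin_r]).
  rewrite Rplus_0_l, H0, Rminus_0_r, Rminus_0_r.
  assert (Ha : 0 < Rabs h) by (apply Rabs_pos_lt; auto).
  unfold Rdiv. rewrite Rabs_mult, Rabs_inv.
  specialize (Hb h Hh1).
  rewrite <- (pow2_abs h) in Hb.
  apply (Rmult_lt_reg_r (Rabs h)); [lra|].
  rewrite Rmult_assoc, Rinv_l by lra. rewrite Rmult_1_r.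
  apply (Rle_lt_trans _ (C * Rabs h ^ 2)); [exact Hb|].
  assert (Rabs h * (C + 1) < eps).
  { apply (Rmult_lt_reg_r (/ (C + 1))). apply Rinv_0_lt_compat; lra.
    replace (Rabs h * (C + 1) * / (C + 1)) with (Rabs h) by (field; lra). exact Hh2. }
  simpl. nra.
Qed.

Lemma path_bd (g : R -> R) C n : 0 <= C -> (forall t, Rabs (g t) <= C * Rabs t ^ (n + 1)) -> (1 <= n)%nat ->
  Deriv g 0 = 0.
Proof.
  intros HC Hb Hn. apply Deriv_eq. apply (zero_deriv g C HC).
  - intros t Ht. eapply Rle_trans; [apply Hb|]. apply Rmult_le_compat_l; auto.
    rewrite <- (pow2_abs t). replace (n + 1)%nat with (2 + (n - 1))%nat by lia.
    rewrite pow_add. assert (H := pow_le1 (Rabs t) (n - 1)). assert (0 <= Rabs t) by apply Rabs_pos.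
    assert (0 <= Rabs t ^ 2) by (apply pow_le; auto). specialize (H (conj H0 Ht)). nra.
  - specialize (Hb 0). rewrite Rabs_R0 in Hb. replace (n+1)%nat with (S n) in Hb by lia. simpl in Hb.
    rewrite Rmult_0_l, Rmult_0_r in Hb. assert (0 <= Rabs (g 0)) by apply Rabs_pos.
    destruct (Req_dec (g 0) 0); auto. assert (0 < Rabs (g 0)) by (apply Rabs_pos_lt; auto). lra.
Qed.

Lemma rad_abs t : radius t 0 0 = Rabs t /\ radius 0 t 0 = Rabs t /\ radius 0 0 t = Rabs t.
Proof.
  unfold radius. split; [|split];
  [replace (t^2 + 0^2 + 0^2) with ((Rabs t)^2) by (rewrite pow2_abs; ring)
  |replace (0^2 + t^2 + 0^2) with ((Rabs t)^2) by (rewrite pow2_abs; ring)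
  |replace (0^2 + 0^2 + t^2) with ((Rabs t)^2) by (rewrite pow2_abs; ring)];
  apply sqrt_pow2; apply Rabs_pos.
Qed.

Lemma fbound (F : R -> R -> R -> R) C n a b c : (forall a b c, Rabs (F a b c) <= C) ->
  Rabs (radius a b c ^ (n + 1) * F a b c) <= C * radius a b c ^ (n + 1).
Proof.
  intros H. rewrite Rabs_mult, Rabs_pos_eq. 
  - rewrite Rmult_comm. apply Rmult_le_compat_r; [apply pow_le; unfold radius; apply sqrt_pos| apply H].
  - apply pow_le; unfold radius; apply sqrt_pos.
Qed.

Lemma origin_zero_gen (F : R -> R -> R -> R) n : (1 <= n)%nat ->
  (exists C, 0 <= C /\ forall a b c, Rabs (F a b c) <= C) ->
  pd0 (fun a b c => radius a b c ^ (n + 1) * F a b c) 0 0 0 = 0 /\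
  pd1 (fun a b c => radius a b c ^ (n + 1) * F a b c) 0 0 0 = 0 /\
  pd2 (fun a b c => radius a b c ^ (n + 1) * F a b c) 0 0 0 = 0.
Proof.
  intros Hn [C [HC Hb]]. unfold pd0, pd1, pd2.
  split; [|split]; apply (path_bd _ C n HC); auto; intros t;
    [rewrite <- (proj1 (rad_abs t)) | rewrite <- (proj1 (proj2 (rad_abs t))) | rewrite <- (proj2 (proj2 (rad_abs t)))];
    apply fbound; auto.
Qed.

Lemma Xdag_origin l n : (1 <= n)%nat -> Xdag l n 0 0 0 = qzero.
Proof.
  intros Hn. unfold Xdag. destruct (Nat.leb (n + 2) l); auto.
  destruct (origin_zero_gen (sphU l (n + 1)) n Hn (sphU_bd l (n+1))) as [H0 [H1 H2]].
  unfold halfDbar. rewrite H0, H1, H2. unfold qzero. f_equal; field.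
Qed.
Lemma Ydag_origin l n : (1 <= n)%nat -> Ydag l n 0 0 0 = qzero.
Proof.
  intros Hn. unfold Ydag. destruct (Nat.eqb l 0); auto. destruct (Nat.leb (n + 2) l); auto.
  destruct (origin_zero_gen (sphV l (n + 1)) n Hn (sphV_bd l (n+1))) as [H0 [H1 H2]].
  unfold halfDbar. rewrite H0, H1, H2. unfold qzero. f_equal; field.
Qed.

Lemma rad0_cases a b c : radius a b c = 0 -> radius a b c ^ (0 + 1) = 0.
Proof. intros H; rewrite H; simpl; ring. Qed.

Lemma fu00 : (fun a b c => radius a b c ^ (0 + 1) * sphU 0 (0 + 1) a b c) = (fun a b c => a).
Proof.
  apply functional_extensionality; intros a; apply functional_extensionality; intros b;
  apply functional_extensionality; intros c.
  destruct (Req_dec (radius a b c) 0) as [H|H].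
  - rewrite rad0_cases by auto. destruct (radius0 _ _ _ H) as [-> _]. ring.
  - rewrite u_formula by auto. unfold KK. rewrite pdO, Leg1, Aa0. simpl. field. auto.
Qed.
Lemma fu10 : (fun a b c => radius a b c ^ (0 + 1) * sphU 1 (0 + 1) a b c) = (fun a b c => b).
Proof.
  apply functional_extensionality; intros a; apply functional_extensionality; intros b;
  apply functional_extensionality; intros c.
  destruct (Req_dec (radius a b c) 0) as [H|H].
  - rewrite rad0_cases by auto. destruct (radius0 _ _ _ H) as [_ [-> _]]. ring.
  - rewrite u_formula by auto. unfold KK. simpl Nat.add. rewrite pd1_1, AaS, Aa0, Bb0. simpl. field. auto.
Qed.
Lemma fv10 : (fun a b c => radius a b c ^ (0 + 1) * sphV 1 (0 + 1) a b c) = (fun a b c => c).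
Proof.
  apply functional_extensionality; intros a; apply functional_extensionality; intros b;
  apply functional_extensionality; intros c.
  destruct (Req_dec (radius a b c) 0) as [H|H].
  - rewrite rad0_cases by auto. destruct (radius0 _ _ _ H) as [_ [_ ->]]. ring.
  - rewrite (v_formula 0) by auto. unfold KK. simpl Nat.add. rewrite pd1_1, BbS, Aa0, Bb0. simpl. field. auto.
Qed.

Lemma Dfst x0 x1 x2 : pd0 (fun a b c => a) x0 x1 x2 = 1 /\ pd1 (fun a b c => a) x0 x1 x2 = 0 /\ pd2 (fun a b c => a) x0 x1 x2 = 0.
Proof. unfold pd0, pd1, pd2. repeat split; apply Deriv_eq; [apply dId | apply dConst | apply dConst]. Qed.
Lemma Dsnd x0 x1 x2 : pd0 (fun a b c => b) x0 x1 x2 = 0 /\ pd1 (fun a b c => b) x0 x1 x2 = 1 /\ pd2 (fun a b c => b) x0 x1 x2 = 0.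
Proof. unfold pd0, pd1, pd2. repeat split; apply Deriv_eq; [apply dConst | apply dId | apply dConst]. Qed.
Lemma Dthd x0 x1 x2 : pd0 (fun a b c => c) x0 x1 x2 = 0 /\ pd1 (fun a b c => c) x0 x1 x2 = 0 /\ pd2 (fun a b c => c) x0 x1 x2 = 1.
Proof. unfold pd0, pd1, pd2. repeat split; apply Deriv_eq; [apply dConst | apply dConst | apply dId]. Qed.

Lemma X00 x0 x1 x2 : Xdag 0 0 x0 x1 x2 = mkQ (1/2) (-0/2) (-0/2) 0.
Proof.
  unfold Xdag. simpl Nat.leb. cbv iota. unfold halfDbar. rewrite fu00.
  destruct (Dfst x0 x1 x2) as [A [B C]]. rewrite A, B, C. reflexivity.
Qed.
Lemma X10 x0 x1 x2 : Xdag 1 0 x0 x1 x2 = mkQ (0/2) (-1/2) (-0/2) 0.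
Proof.
  unfold Xdag. simpl Nat.leb. cbv iota. unfold halfDbar. rewrite fu10.
  destruct (Dsnd x0 x1 x2) as [A [B C]]. rewrite A, B, C. reflexivity.
Qed.
Lemma Y10 x0 x1 x2 : Ydag 1 0 x0 x1 x2 = mkQ (0/2) (-0/2) (-1/2) 0.
Proof.
  unfold Ydag. simpl Nat.leb. simpl Nat.eqb. cbv iota. unfold halfDbar. rewrite fv10.
  destruct (Dthd x0 x1 x2) as [A [B C]]. rewrite A, B, C. reflexivity.
Qed.

Lemma Y00 x0 x1 x2 : Ydag 0 0 x0 x1 x2 = qzero. Proof. reflexivity. Qed.
Lemma X20 x0 x1 x2 : Xdag 2 0 x0 x1 x2 = qzero. Proof. reflexivity. Qed.
Lemma Y20 x0 x1 x2 : Ydag 2 0 x0 x1 x2 = qzero. Proof. reflexivity. Qed.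

Theorem proposition2 :
  (forall (n : nat) (x0 x1 x2 : R),
      Xdag 0 n x0 x1 x2 =
        qscal (/ (INR n + 2))
          (qadd (qmul (Xdag 1 n x0 x1 x2) qe1) (qmul (Ydag 1 n x0 x1 x2) qe2))
   /\ (forall m : nat, (1 <= m <= n + 1)%nat ->
        Xdag m n x0 x1 x2 =
          qadd
            (qscal (- (INR n + INR m + 1) / 2)
               (qsub (qmul (Xdag (m - 1) n x0 x1 x2) qe1)
                     (qmul (Ydag (m - 1) n x0 x1 x2) qe2)))
            (qscal (/ (2 * (INR n + INR m + 2)))
               (qadd (qmul (Xdag (m + 1) n x0 x1 x2) qe1)
                     (qmul (Ydag (m + 1) n x0 x1 x2) qe2)))
        /\
        Ydag m n x0 x1 x2 =
          qadd
            (qscal (- (INR n + INR m + 1) / 2)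
               (qadd (qmul (Ydag (m - 1) n x0 x1 x2) qe1)
                     (qmul (Xdag (m - 1) n x0 x1 x2) qe2)))
            (qscal (/ (2 * (INR n + INR m + 2)))
               (qsub (qmul (Ydag (m + 1) n x0 x1 x2) qe1)
                     (qmul (Xdag (m + 1) n x0 x1 x2) qe2)))))
  /\
  (forall x0 x1 x2 : R,
      Xdag 0 0 x0 x1 x2 = qreal (1 / 2)
   /\ qmul (Xdag 1 0 x0 x1 x2) qe1 = qreal (1 / 2)
   /\ qmul (Ydag 1 0 x0 x1 x2) qe2 = qreal (1 / 2)).
Proof.
  split.
  - intros n x0 x1 x2. destruct n as [|n'].
    + split.
      * rewrite X00, X10, Y10. unfold qscal, qadd, qmul, qe1, qe2; simpl. f_equal; field.
      * intros m Hm. assert (m = 1%nat) by lia. subst m. simpl Nat.sub. simpl Nat.add.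
        rewrite X00, X10, Y10, Y00, X20, Y20.
        unfold qscal, qadd, qsub, qopp, qmul, qe1, qe2, qzero; simpl.
        split; f_equal; field.
    + destruct (Req_dec (radius x0 x1 x2) 0) as [H|H].
      * destruct (radius0 _ _ _ H) as [-> [-> ->]].
        assert (Hn : (1 <= S n')%nat) by lia.
        split.
        -- rewrite !Xdag_origin, !Ydag_origin by auto.
           unfold qscal, qadd, qmul, qe1, qe2, qzero; cbn [q0 q1 q2 q3]. f_equal; field; 
           assert (0 <= INR (S n')) by apply pos_INR; lra.
        -- intros m Hm. rewrite !Xdag_origin, !Ydag_origin by auto.
           assert (0 <= INR (S n')) by apply pos_INR. assert (0 <= INR m) by apply pos_INR.
           unfold qsub, qscal, qadd, qopp, qmul, qe1, qe2, qzero; cbn [q0 q1 q2 q3].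
           split; f_equal; field; lra.
      * split; [apply main_first; auto|]. intros m Hm. apply main_rec; auto.
  - intros x0 x1 x2. rewrite X00, X10, Y10.
    unfold qreal, qmul, qe1, qe2; simpl. split; [|split]; f_equal; field.
Qed.
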